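(* For any CC-MAR instance $(G,\mathcal{T})$, there exists a strategy profile of minimum total cost in which all agents having identical terminal pairs (i.e., $(s_i,t_i)=(s_j,t_j)$) use identical paths.
   Context: A mixed graph $G=(V,E,A)$ has undirected edges $E\subseteq\binom{V}{2}$ with positive integer weights $w_e$ and arcs $A\subseteq V\times V$. A path is a sequence of pairwise distinct vertices in which consecutive vertices are joined by an edge or by an arc in the forward direction. A CC-MAR instance is $(G,\mathcal{T})$ with $\mathcal{T}$ a multiset of $k$ pairs $(s_i,t_i)$ (the same pair may occur several times), each connected by some path. A strategy profile $\mathcal{P}=\{P_1,\dots,P_k\}$ consists of $s_i$-$t_i$ paths. For $\{u,v\}\in E$, $x_{uv}$ is the number of paths traversing it from $u$ to $v$. The total cost is $\mathrm{cost}(\mathcal{P})=\sum_{\{u,v\}\in E}w_{uv}x_{uv}x_{vu}$. *)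

(* Defs.v *)
From mathcomp Require Import all_boot.
Set Implicit Arguments. Unset Strict Implicit. Unset Printing Implicit Defensive.

(* A mixed graph on a finite vertex type V:
   - E : rel V, the undirected edges ({u,v} \in E iff E u v; E symmetric, irreflexive),
   - w : V -> V -> nat, the (symmetric) edge weights,
   - A : rel V, the arcs ((u,v) \in A iff A u v). *)

Section MixedGraph.
Variables (V : finType) (E A : rel V).

Definition step : rel V := fun u v => E u v || A u v.

Definition is_stpath (s t : V) (p : seq V) : bool :=
  match p with
  | [::] => false
  | x :: q => [&& x == s, last x q == t, uniq p & path step x q]
  end.

Definition traverses (p : seq V) (u v : V) : bool :=
  (u, v) \in zip p (behead p).

Definition xflow (k : nat) (P : 'I_k -> seq V) (u v : V) : nat :=
  \sum_(i < k) (traverses (P i) u v : nat).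

Definition total_cost (w : V -> V -> nat) (k : nat) (P : 'I_k -> seq V) : nat :=
  \sum_(u : V) \sum_(v : V | (enum_rank u < enum_rank v) && E u v)
     w u v * xflow P u v * xflow P v u.

Definition is_profile (k : nat) (st : 'I_k -> V * V) (P : 'I_k -> seq V) : Prop :=
  forall i, is_stpath (st i).1 (st i).2 (P i).

End MixedGraph.

(* Main.v *)
Require Import Defs.
From mathcomp Require Import all_boot.
From mathcomp Require Import zify.
From Stdlib Require Import Classical.

Section Aux.
Variables (V : finType) (E Ar : rel V) (w : V -> V -> nat) (k : nat).

Lemma zip_mem (x : V) q a b : (a, b) \in zip (x :: q) q -> a \in x :: q /\ b \in q.
Proof.
elim: q x => [|y q IH] x //=.
rewrite in_cons => /orP [/eqP [-> ->]|/IH [h1 h2]].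
  by rewrite !in_cons !eqxx /=.
by rewrite in_cons h1 orbT in_cons h2 orbT.
Qed.

Lemma trav_asym (p : seq V) u v : uniq p -> traverses p u v -> traverses p v u -> False.
Proof.
rewrite /traverses.
elim: p => [|x [|y q] IH] //= /andP [nx uq].
rewrite !in_cons => /orP [/eqP [eu ev]|h1] /orP [/eqP [eu' ev']|h2].
- by move: nx; rewrite -ev eu' in_cons eqxx.
- have [_ h] := @zip_mem _ _ _ _ h2. by move: nx; rewrite -eu in_cons h orbT.
- have [_ h] := @zip_mem _ _ _ _ h1. by move: nx; rewrite -eu' in_cons h orbT.
- exact: IH uq h1 h2.
Qed.

Definition cc (u v : V) := (enum_rank u < enum_rank v) && E u v.
Definition S (f : V -> V -> nat) := \sum_(u : V) \sum_(v : V | cc u v) f u v.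

Lemma S_sum (P : pred 'I_k) (F : 'I_k -> V -> V -> nat) :
  \sum_(i | P i) S (F i) = S (fun u v => \sum_(i | P i) F i u v).
Proof.
rewrite /S exchange_big; apply: eq_bigr => u _; by rewrite exchange_big.
Qed.

Lemma S_add f g : S f + S g = S (fun u v => f u v + g u v).
Proof. rewrite /S -big_split; apply: eq_bigr => u _; by rewrite -big_split. Qed.

Lemma S_le f g : (forall u v, f u v <= g u v) -> S f <= S g.
Proof. move=> h; apply: leq_sum => u _; apply: leq_sum => v _; exact: h. Qed.

Lemma S_ext f g : (forall u v, f u v = g u v) -> S f = S g.
Proof. move=> h; apply: eq_bigr => u _; apply: eq_bigr => v _; exact: h. Qed.

Lemma S_mul a f : a * S f = S (fun u v => a * f u v).
Proof. rewrite /S big_distrr; apply: eq_bigr => u _; by rewrite big_distrr. Qed.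

Definition oth (g : pred 'I_k) (Q : 'I_k -> seq V) u v :=
  \sum_(i < k | ~~ g i) (traverses (Q i) u v : nat).

Definition L g Q (q : seq V) :=
  S (fun u v => w u v * (oth g Q u v * traverses q v u + traverses q u v * oth g Q v u)).

Lemma xsplit (g : pred 'I_k) (Q : 'I_k -> seq V) u v :
  xflow Q u v = \sum_(i < k | g i) (traverses (Q i) u v : nat) + oth g Q u v.
Proof. by rewrite /xflow (bigID g). Qed.

Lemma core (Q : 'I_k -> seq V) (g : pred 'I_k) (p : seq V) :
  uniq p -> (forall i, g i -> L g Q p <= L g Q (Q i)) ->
  total_cost E w (fun i => if g i then p else Q i) <= total_cost E w Q.
Proof.
move=> up hL.
set C0 := S (fun u v => w u v * oth g Q u v * oth g Q v u).
have step1 : C0 + \sum_(i | g i) L g Q (Q i) <= total_cost E w Q.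
  rewrite /L S_sum S_add; apply: S_le => u v.
  rewrite !(xsplit g).
  have e : \sum_(i < k | g i) w u v * (oth g Q u v * traverses (Q i) v u + traverses (Q i) u v * oth g Q v u) = w u v * (oth g Q u v * \sum_(i < k | g i) (traverses (Q i) v u:nat) + (\sum_(i < k | g i) (traverses (Q i) u v : nat)) * oth g Q v u).
    rewrite (big_distrr (oth g Q u v)) (big_distrl (oth g Q v u)) -big_split big_distrr /=.
    done.
  rewrite e.
  set o := oth g Q u v; set o' := oth g Q v u.
  set b := \sum_(i < k | g i) (traverses (Q i) u v : nat).
  set b' := \sum_(i < k | g i) (traverses (Q i) v u : nat).
  nia.
set m := \sum_(i < k | g i) 1.
have step2 : total_cost E w (fun i => if g i then p else Q i) = C0 + m * L g Q p.
  rewrite /L S_mul S_add; apply: S_ext => u v.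
  have ho : forall a b, oth g (fun i => if g i then p else Q i) a b = oth g Q a b.
    by move=> a b; apply: eq_bigr => i /negbTE ->.
  have hb : forall a b, \sum_(i < k | g i) (traverses (if g i then p else Q i) a b : nat) = m * traverses p a b.
    move=> a b; rewrite /m big_distrl /=; apply: eq_bigr => i ->; by rewrite mul1n.
  rewrite !(xsplit g) !ho !hb.
  have := @trav_asym p u v up.
  case: (traverses p u v); case: (traverses p v u) => /= h; last (by nia); try (by nia).
have step3 : \sum_(i | g i) L g Q p <= \sum_(i | g i) L g Q (Q i).
  by apply: leq_sum => i gi; apply: hL.
have : \sum_(i | g i) L g Q p = m * L g Q p by rewrite /m big_distrl; apply: eq_bigr => i _; by rewrite /= mul1n.
lia.
Qed.

End Aux.

Lemma stpath_uniq {V : finType} {E A : rel V} s t p : is_stpath E A s t p -> uniq p.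
Proof. by case: p => //= x q /and4P [_ _ u _]. Qed.

Definition rep {k : nat} {V : finType} (st : 'I_k -> V * V) (i : 'I_k) : 'I_k :=
  odflt i [pick j | st j == st i].

Lemma rep_st {k : nat} {V : finType} (st : 'I_k -> V * V) i : st (rep st i) = st i.
Proof. rewrite /rep; case: pickP => [r /eqP h|] //=. Qed.

Lemma rep_eq {k : nat} {V : finType} {st : 'I_k -> V * V} {i j} : st i = st j -> rep st i = rep st j.
Proof.
move=> hij; rewrite /rep hij; case: pickP => //= h.
by have := h j; rewrite eqxx.
Qed.

Definition Dset {k : nat} {V : finType} (st : 'I_k -> V * V) (Q : 'I_k -> seq V) : {set 'I_k} :=
  [set i | Q i != Q (rep st i)].

Theorem mainTheorem7 (V : finType) (E A : rel V) (w : V -> V -> nat)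
  (k : nat) (st : 'I_k -> V * V) :
  (forall u v, E u v = E v u) ->
  (forall u, ~~ E u u) ->
  (forall u v, w u v = w v u) ->
  (forall u v, E u v -> 0 < w u v) ->
  (forall i, exists p, is_stpath E A (st i).1 (st i).2 p) ->
  exists P : 'I_k -> seq V,
    [/\ is_profile E A st P,
        (forall i j, st i = st j -> P i = P j) &
        (forall Q : 'I_k -> seq V, is_profile E A st Q ->
           total_cost E w P <= total_cost E w Q)].
Proof.
move=> _ _ _ _ hex.
pose M (Q : 'I_k -> seq V) := total_cost E w Q * k.+1 + #|Dset st Q|.
have Dk : forall Q, #|Dset st Q| <= k.
  by move=> Q; apply: leq_trans (max_card _) _; rewrite card_ord.
have [P [hP hmin]] : exists P, is_profile E A st P /\
    forall Q, is_profile E A st Q -> M P <= M Q.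
  suff H : forall n Q, is_profile E A st Q -> M Q <= n -> exists P, is_profile E A st P /\
      forall Q, is_profile E A st Q -> M P <= M Q.
    pose Q0 := fun i => xchoose (hex i).
    apply: (H (M Q0) Q0) => // i; exact: (xchooseP (hex i)).
  elim => [|n IH] Q hQ hM.
    by exists Q; split => // Q' _; apply: leq_trans hM _.
  case: (classic (forall Q', is_profile E A st Q' -> M Q <= M Q')) => [h|h].
    by exists Q.
  have [Q' hQ'] := not_all_ex_not _ _ h.
  have [hQ'1 hQ'2] := imply_to_and _ _ hQ'.
  apply: (IH Q' hQ'1).
  move/negP: hQ'2; rewrite -ltnNge => hlt.
  by rewrite -ltnS; apply: leq_trans hlt hM.
have hD : forall i, P i = P (rep st i).
  move=> i; apply/eqP; apply/negPn/negP => hi.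
  pose g := fun j => st j == st i.
  have gi : g i by rewrite /g eqxx.
  case: (@arg_minnP _ i g (fun j => @L V E w k g P (P j)) gi) => js gjs hjs.
  pose Q' := fun j => if g j then P js else P j.
  have hQ' : is_profile E A st Q'.
    move=> j; rewrite /Q'; case gj: (g j); last exact: hP.
    by move/eqP: gj => ->; move/eqP: gjs => <-; exact: hP.
  have hc : total_cost E w Q' <= total_cost E w P.
    apply: core; first exact: stpath_uniq (hP js).
    by move=> j gj; apply: hjs.
  have hsub : Dset st Q' \proper Dset st P.
    apply/properP; split.
      apply/subsetP => j; rewrite !inE /Q'.
      have : g (rep st j) = g j by rewrite /g rep_st.
      move=> ->; case: (g j) => //; by rewrite eqxx.
    exists i; first by rewrite inE.
    by rewrite inE /Q' gi /g rep_st eqxx eqxx.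
  have := proper_card hsub.
  have := hmin Q' hQ'.
  rewrite /M; nia.
exists P; split => //.
  by move=> i j hij; rewrite hD [RHS]hD (rep_eq (st:=st) hij).
move=> Q hQ; have := hmin Q hQ; rewrite /M; have := Dk Q; have := Dk P; nia.
Qed.
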